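(* Let $n\ge2$, $m\ge1$, and let $G$ be given by the presentation $$G=\Big\langle a_1,\dots,a_n,c_1,\dots,c_m \ \Big|\ [a_i,a_j]=\prod_{t=1}^m c_t^{\lambda_t^{ij}}\ (1\le i<j\le n),\ [a_i,c_j]=[c_k,c_r]=1 \text{ for all } i,j,k,r\Big\rangle$$ for some integers $\lambda_t^{ij}$. Then there are maps $\alpha_i,\gamma_t:G\to\mathbb{Z}$ such that every $g\in G$ can be written as $g=\prod_{i=1}^n a_i^{\alpha_i(g)}\prod_{t=1}^m c_t^{\gamma_t(g)}$, and this expression is unique: if $g=\prod_i a_i^{x_i}\prod_t c_t^{y_t}$ for integers $x_i,y_t$, then $x_i=\alpha_i(g)$ and $y_t=\gamma_t(g)$ for all $i,t$.
   Context: Commutators: $[g,h]=g^{-1}h^{-1}gh$. *)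

(* Defs.v *)
From Stdlib Require Import ZArith List Arith.
Import ListNotations.
Open Scope Z_scope.

Record group : Type := Group {
  gcar :> Type;
  gmul : gcar -> gcar -> gcar;
  gone : gcar;
  ginv : gcar -> gcar;
  gmulA : forall x y z, gmul x (gmul y z) = gmul (gmul x y) z;
  gmul1l : forall x, gmul gone x = x;
  gmulVl : forall x, gmul (ginv x) x = gone
}.

Arguments gmul {g}.
Arguments gone {g}.
Arguments ginv {g}.

Fixpoint npow {G : group} (g : G) (k : nat) : G :=
  match k with O => gone | S k' => gmul g (npow g k') end.

Definition zpow {G : group} (g : G) (k : Z) : G :=
  match k with
  | Z0 => gone
  | Zpos p => npow g (Pos.to_nat p)
  | Zneg p => ginv (npow g (Pos.to_nat p))
  end.

Definition comm {G : group} (g h : G) : G :=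
  gmul (gmul (gmul (ginv g) (ginv h)) g) h.

Definition gprod {G : group} (l : list G) : G := fold_right gmul gone l.

Definition pprod {G : group} (k : nat) (b : nat -> G) (e : nat -> Z) : G :=
  gprod (map (fun i => zpow (b i) (e i)) (seq 0 k)).

(* Relations of the presentation (generators a_0..a_{n-1}, c_0..c_{m-1},
   exponents lam i j t). *)
Definition rels (n m : nat) (lam : nat -> nat -> nat -> Z)
  (H : group) (a c : nat -> H) : Prop :=
  (forall i j, (i < j)%nat -> (j < n)%nat ->
     comm (a i) (a j) = pprod m c (lam i j)) /\
  (forall i j, (i < n)%nat -> (j < m)%nat -> comm (a i) (c j) = gone) /\
  (forall k r, (k < m)%nat -> (r < m)%nat -> comm (c k) (c r) = gone).

Inductive generated {G : group} (n m : nat) (a c : nat -> G) : G -> Prop :=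
  | gen_a : forall i, (i < n)%nat -> generated n m a c (a i)
  | gen_c : forall t, (t < m)%nat -> generated n m a c (c t)
  | gen_one : generated n m a c gone
  | gen_mul : forall x y, generated n m a c x -> generated n m a c y ->
      generated n m a c (gmul x y)
  | gen_inv : forall x, generated n m a c x -> generated n m a c (ginv x).

Definition is_hom {G H : group} (f : G -> H) : Prop :=
  forall x y, f (gmul x y) = gmul (f x) (f y).

(* G, with distinguished elements a, c, is the group given by the presentation:
   the relations hold, a and c generate G, and G has the universal property. *)
Definition presented (n m : nat) (lam : nat -> nat -> nat -> Z)
  (G : group) (a c : nat -> G) : Prop :=
  rels n m lam G a c /\
  (forall g : G, generated n m a c g) /\
  (forall (H : group) (aH cH : nat -> H), rels n m lam H aH cH ->
     exists f : G -> H, is_hom f /\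
       (forall i, (i < n)%nat -> f (a i) = aH i) /\
       (forall t, (t < m)%nat -> f (c t) = cH t)).

(* Main.v *)
Require Import Defs.
From Stdlib Require Import ZArith List Arith Lia FunctionalExtensionality.
Import ListNotations.
Open Scope Z_scope.
Local Notation "x ** y" := (gmul x y) (at level 40, left associativity).


Lemma mulgV {G : group} (x : G) : x ** ginv x = gone.
Proof.
  rewrite <- (gmul1l G (x ** ginv x)).
  rewrite <- (gmulVl G (ginv x)) at 1.
  rewrite <- gmulA, (gmulA _ (ginv x) x), gmulVl, gmul1l. apply gmulVl.
Qed.

Lemma mulg1 {G : group} (x : G) : x ** gone = x.
Proof. rewrite <- (gmulVl G x), gmulA, (@mulgV G), gmul1l. reflexivity. Qed.

Lemma mulKg {G : group} (x y : G) : ginv x ** (x ** y) = y.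
Proof. rewrite gmulA, gmulVl, gmul1l. reflexivity. Qed.

Lemma mulVKg {G : group} (x y : G) : x ** (ginv x ** y) = y.
Proof. rewrite gmulA, (@mulgV G), gmul1l. reflexivity. Qed.

Lemma mulgK {G : group} (x y : G) : y ** x ** ginv x = y.
Proof. rewrite <- gmulA, (@mulgV G), (@mulg1 G). reflexivity. Qed.

Lemma mulgVK {G : group} (x y : G) : y ** ginv x ** x = y.
Proof. rewrite <- gmulA, gmulVl, (@mulg1 G). reflexivity. Qed.

Lemma mulg_canl {G : group} (x y z : G) : x ** y = x ** z -> y = z.
Proof. intros H. rewrite <- ((@mulKg G) x y), H, (@mulKg G). reflexivity. Qed.

Lemma mulg_canr {G : group} (x y z : G) : y ** x = z ** x -> y = z.
Proof. intros H. rewrite <- ((@mulgK G) x y), H, (@mulgK G). reflexivity. Qed.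

Lemma inv_uniq {G : group} (x y : G) : x ** y = gone -> x = ginv y.
Proof. intros H. apply (mulg_canr y). rewrite H, gmulVl. reflexivity. Qed.

Lemma invgK {G : group} (x : G) : ginv (ginv x) = x.
Proof. symmetry. apply inv_uniq. apply (@mulgV G). Qed.

Lemma invg1 {G : group} : ginv (@gone G) = gone.
Proof. symmetry. apply inv_uniq. apply gmul1l. Qed.

Lemma invgM {G : group} (x y : G) : ginv (x ** y) = ginv y ** ginv x.
Proof. symmetry. apply inv_uniq.
  rewrite <- gmulA, (gmulA _ (ginv x)), gmulVl, gmul1l, gmulVl. reflexivity. Qed.

Definition commute {G : group} (x y : G) := x ** y = y ** x.
Definition central {G : group} (z : G) := forall y, commute z y.

Lemma comm_one {G : group} (x y : G) : comm x y = gone -> commute x y.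
Proof. unfold comm, commute. intros H.
  assert (E: y ** x ** (ginv x ** ginv y ** x ** y) = y ** x) by (rewrite H; apply (@mulg1 G)).
  rewrite <- E. rewrite !gmulA. rewrite ((@mulgK G) x y), (@mulgV G), gmul1l. reflexivity. Qed.

Lemma comm_rel {G : group} (x y z : G) : comm x y = z -> x ** y = y ** x ** z.
Proof. unfold comm. intros H. rewrite <- H. rewrite !gmulA, (@mulgK G), (@mulgV G), gmul1l. reflexivity. Qed.

Lemma comm_of {G : group} (x y z : G) : x ** y = y ** x ** z -> comm x y = z.
Proof. unfold comm. intros H. rewrite <- (gmulA _ _ x y), H, !gmulA, (@mulgVK G), gmulVl, gmul1l.
  reflexivity. Qed.

Lemma commute_sym {G : group} (x y : G) : commute x y -> commute y x.
Proof. unfold commute; auto. Qed.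

Lemma commute1 {G : group} (x : G) : commute x gone.
Proof. unfold commute. rewrite (@mulg1 G), gmul1l. reflexivity. Qed.

Lemma commuteM {G : group} (x y z : G) : commute x y -> commute x z -> commute x (y ** z).
Proof. unfold commute. intros H1 H2. rewrite gmulA, H1, <- gmulA, H2, gmulA. reflexivity. Qed.

Lemma commuteV {G : group} (x y : G) : commute x y -> commute x (ginv y).
Proof. unfold commute. intros H. apply (mulg_canl y). rewrite gmulA, <- H, <- gmulA, (@mulgV G), (@mulVKg G), (@mulg1 G).
  reflexivity. Qed.

Lemma commute_npow {G : group} (x y : G) k : commute x y -> commute x (npow y k).
Proof. intros H. induction k; simpl. apply commute1. apply commuteM; auto. Qed.

Lemma commute_zpow {G : group} (x y : G) k : commute x y -> commute x (zpow y k).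
Proof. intros H. destruct k; simpl. apply commute1. apply commute_npow; auto.
  apply commuteV, commute_npow; auto. Qed.

Lemma central_M {G : group} (x y : G) : central x -> central y -> central (x ** y).
Proof. intros Hx Hy z. apply commute_sym, commuteM; apply commute_sym; auto. Qed.

Lemma central_zpow {G : group} (x : G) k : central x -> central (zpow x k).
Proof. intros Hx z. apply commute_sym, commute_zpow, commute_sym, Hx. Qed.

Lemma central_gprod {G : group} (l : list G) : (forall z, In z l -> central z) -> central (gprod l).
Proof. induction l; simpl; intros H. intros z; apply commute_sym, commute1.
  apply central_M; auto. Qed.

Lemma npow_add {G : group} (g : G) a b : npow g (a + b) = npow g a ** npow g b.
Proof. induction a; simpl. rewrite gmul1l; auto. rewrite IHa, gmulA. reflexivity. Qed.

Lemma npow_succ_r {G : group} (g : G) a : npow g (S a) = npow g a ** g.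
Proof. rewrite <- Nat.add_1_r, npow_add. simpl. rewrite (@mulg1 G). reflexivity. Qed.

Lemma zpow_nat {G : group} (g : G) N : zpow g (Z.of_nat N) = npow g N.
Proof. destruct N. reflexivity. simpl. rewrite SuccNat2Pos.id_succ. reflexivity. Qed.

Lemma zpow_negnat {G : group} (g : G) N : zpow g (- Z.of_nat N) = ginv (npow g N).
Proof. destruct N. simpl. rewrite (@invg1 G). reflexivity. simpl. rewrite SuccNat2Pos.id_succ. reflexivity. Qed.

Lemma zcases k : (exists N, k = Z.of_nat N) \/ (exists N, k = - Z.of_nat (S N)).
Proof. destruct (Z.le_gt_cases 0 k). left. exists (Z.to_nat k). lia.
  right. exists (Z.to_nat (- k) - 1)%nat. lia. Qed.

Lemma zpow_succ {G : group} (g : G) k : zpow g (k + 1) = g ** zpow g k.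
Proof. destruct (zcases k) as [[N ->]|[N ->]].
  - replace (Z.of_nat N + 1) with (Z.of_nat (S N)) by lia. rewrite !zpow_nat. reflexivity.
  - replace (- Z.of_nat (S N) + 1) with (- Z.of_nat N) by lia. rewrite !zpow_negnat.
    rewrite npow_succ_r, (@invgM G), (@mulVKg G). reflexivity. Qed.

Lemma zpow_add {G : group} (g : G) k l : zpow g (k + l) = zpow g k ** zpow g l.
Proof. revert k. apply Z.peano_ind.
  - simpl. rewrite gmul1l. reflexivity.
  - intros x H. rewrite <- !Z.add_1_r. replace (x + 1 + l) with ((x + l) + 1) by lia.
    rewrite !zpow_succ, H, gmulA. reflexivity.
  - intros x H. apply (mulg_canl g). rewrite gmulA, <- !zpow_succ.
    replace (Z.pred x + l + 1) with (x + l) by lia. replace (Z.pred x + 1) with x by lia.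
    exact H.
Qed.

Lemma hom1 {G H : group} (f : G -> H) : is_hom f -> f gone = gone.
Proof. intros Hf. apply (mulg_canl (f gone)). rewrite <- Hf, (@mulg1 G), (@mulg1 H). reflexivity. Qed.

Lemma homV {G H : group} (f : G -> H) x : is_hom f -> f (ginv x) = ginv (f x).
Proof. intros Hf. apply inv_uniq. rewrite <- Hf, gmulVl. apply hom1; auto. Qed.

Lemma hom_npow {G H : group} (f : G -> H) x k : is_hom f -> f (npow x k) = npow (f x) k.
Proof. intros Hf. induction k; simpl. apply hom1; auto. rewrite Hf, IHk. reflexivity. Qed.

Lemma hom_zpow {G H : group} (f : G -> H) x k : is_hom f -> f (zpow x k) = zpow (f x) k.
Proof. intros Hf. destruct k; simpl. apply hom1; auto. apply hom_npow; auto.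
  rewrite homV, hom_npow; auto. Qed.

Lemma hom_gprod {G H : group} (f : G -> H) l : is_hom f -> f (gprod l) = gprod (map f l).
Proof. intros Hf. induction l; simpl. apply hom1; auto. rewrite Hf, IHl. reflexivity. Qed.

Lemma hom_pprod {G H : group} (f : G -> H) k b e : is_hom f -> f (pprod k b e) = pprod k (fun i => f (b i)) e.
Proof. intros Hf. unfold pprod. rewrite hom_gprod, map_map; auto. f_equal. apply map_ext.
  intros; apply hom_zpow; auto. Qed.

Lemma gprod_app {G : group} (l1 l2 : list G) : gprod (l1 ++ l2) = gprod l1 ** gprod l2.
Proof. induction l1; simpl. rewrite gmul1l; auto. rewrite IHl1, gmulA. reflexivity. Qed.

Lemma pprod_ext {G : group} k (b b' : nat -> G) e e' :
  (forall i, (i < k)%nat -> b i = b' i /\ e i = e' i) -> pprod k b e = pprod k b' e'.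
Proof. intros H. unfold pprod. f_equal. apply map_ext_in. intros i Hi. apply in_seq in Hi.
  destruct (H i) as [-> ->]; auto. lia. Qed.

Lemma gprod_ones {G : group} (l : list nat) (b : nat -> G) :
  gprod (map (fun i => zpow (b i) 0) l) = gone.
Proof. induction l as [|x l IH]; [reflexivity|].
  change (gone ** gprod (map (fun i => zpow (b i) 0) l) = gone). rewrite IH, gmul1l. reflexivity. Qed.


Definition zsum (l : list nat) (f : nat -> Z) : Z := fold_right (fun i acc => f i + acc) 0 l.

Lemma zsum_ext_in l f g : (forall i, In i l -> f i = g i) -> zsum l f = zsum l g.
Proof. induction l; simpl; intros H; auto. rewrite H, IHl; auto. Qed.

Lemma zsum_ext l f g : (forall i, f i = g i) -> zsum l f = zsum l g.
Proof. intros; apply zsum_ext_in; auto. Qed.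

Lemma zsum_add l f g : zsum l (fun i => f i + g i) = zsum l f + zsum l g.
Proof. induction l; simpl; auto. rewrite IHl. ring. Qed.

Lemma zsum_opp l f : zsum l (fun i => - f i) = - zsum l f.
Proof. induction l; simpl; auto. rewrite IHl. ring. Qed.

Lemma zsum_zero l : zsum l (fun _ => 0) = 0.
Proof. induction l; simpl; auto. Qed.

Lemma zsum_sel k len j g :
  zsum (seq k len) (fun q => if Nat.eqb q j then g q else 0) =
  if (Nat.leb k j && Nat.ltb j (k + len))%bool then g j else 0.
Proof. revert k. induction len; intros k; simpl.
  - destruct (Nat.leb_spec k j); destruct (Nat.ltb_spec j (k+0)); simpl; auto; lia.
  - rewrite IHlen. replace (S k + len)%nat with (k + S len)%nat by lia.
    destruct (Nat.eqb_spec k j).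
    + subst. destruct (Nat.leb_spec (S j) j); [lia|]. destruct (Nat.leb_spec j j); [|lia].
      destruct (Nat.ltb_spec j (j + S len)); [|lia]. simpl. ring.
    + destruct (Nat.leb_spec (S k) j); destruct (Nat.leb_spec k j); simpl; try lia;
      destruct (Nat.ltb j (k + S len)); ring.
Qed.

Definition unit (i : nat) : nat -> Z := fun s => if Nat.eqb s i then 1 else 0.
Definition zero : nat -> Z := fun _ => 0.

Definition Bf (n m : nat) (lam : nat -> nat -> nat -> Z) (x y : nat -> Z) (t : nat) : Z :=
  if Nat.ltb t m then - zsum (seq 0 n) (fun q => zsum (seq 0 q) (fun p => x q * y p * lam p q t)) else 0.
Arguments Bf : simpl never.

Lemma Bf_addl n m lam x y z t : Bf n m lam (fun s => x s + y s) z t = Bf n m lam x z t + Bf n m lam y z t.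
Proof. unfold Bf. destruct (Nat.ltb t m); [|reflexivity].
  rewrite <- Z.opp_add_distr, <- zsum_add. f_equal. apply zsum_ext. intros q.
  rewrite <- zsum_add. apply zsum_ext. intros p. ring. Qed.

Lemma Bf_addr n m lam x y z t : Bf n m lam x (fun s => y s + z s) t = Bf n m lam x y t + Bf n m lam x z t.
Proof. unfold Bf. destruct (Nat.ltb t m); [|reflexivity].
  rewrite <- Z.opp_add_distr, <- zsum_add. f_equal. apply zsum_ext. intros q.
  rewrite <- zsum_add. apply zsum_ext. intros p. ring. Qed.

Lemma Bf_oppl n m lam x z t : Bf n m lam (fun s => - x s) z t = - Bf n m lam x z t.
Proof. unfold Bf. destruct (Nat.ltb t m); [|reflexivity].
  f_equal. rewrite <- zsum_opp. apply zsum_ext. intros q.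
  rewrite <- zsum_opp. apply zsum_ext. intros p. ring. Qed.

Lemma Bf_vanish n m lam x y t : (forall p q, (p < q)%nat -> x q * y p = 0) -> Bf n m lam x y t = 0.
Proof. intros H. unfold Bf. destruct (Nat.ltb t m); [|reflexivity].
  rewrite (zsum_ext_in _ _ (fun _ => 0)). rewrite zsum_zero; reflexivity.
  intros q _. rewrite (zsum_ext_in _ _ (fun _ => 0)). apply zsum_zero.
  intros p Hp. apply in_seq in Hp. rewrite H by lia. ring. Qed.

Lemma Bf_zl n m lam y t : Bf n m lam zero y t = 0.
Proof. apply Bf_vanish. intros. reflexivity. Qed.
Lemma Bf_zr n m lam y t : Bf n m lam y zero t = 0.
Proof. apply Bf_vanish. intros. unfold zero. ring. Qed.

Lemma Bf_units n m lam i j t : (i < j)%nat -> (j < n)%nat ->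
  Bf n m lam (unit j) (unit i) t = if Nat.ltb t m then - lam i j t else 0.
Proof. intros Hij Hjn. unfold Bf. destruct (Nat.ltb t m); [|reflexivity]. f_equal.
  rewrite (zsum_ext _ _ (fun q => if Nat.eqb q j then zsum (seq 0 q) (fun p => if Nat.eqb p i then lam p q t else 0) else 0)).
  - rewrite zsum_sel. destruct (Nat.leb 0 j && Nat.ltb j (0 + n))%bool eqn:E.
    + rewrite zsum_sel. destruct (Nat.leb 0 i && Nat.ltb i (0 + j))%bool eqn:E2; auto.
      apply Bool.andb_false_iff in E2. destruct E2 as [E2|E2]; [apply Nat.leb_gt in E2|apply Nat.ltb_ge in E2]; lia.
    + apply Bool.andb_false_iff in E. destruct E as [E|E]; [apply Nat.leb_gt in E|apply Nat.ltb_ge in E]; lia.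
  - intros q. unfold unit. destruct (Nat.eqb q j).
    + apply zsum_ext. intros p. destruct (Nat.eqb p i); ring.
    + rewrite (zsum_ext _ _ (fun _ => 0)). apply zsum_zero. intros; ring.
Qed.

Definition Hcar := ((nat -> Z) * (nat -> Z))%type.
Definition Hmul n m lam (p q : Hcar) : Hcar :=
  (fun s => fst p s + fst q s, fun t => snd p t + snd q t + Bf n m lam (fst p) (fst q) t).
Definition Hinv n m lam (p : Hcar) : Hcar :=
  (fun s => - fst p s, fun t => Bf n m lam (fst p) (fst p) t - snd p t).
Definition Hone : Hcar := (zero, zero).

Lemma Heq (p q : Hcar) : (forall s, fst p s = fst q s) -> (forall t, snd p t = snd q t) -> p = q.
Proof. destruct p, q; simpl; intros H1 H2. f_equal; apply functional_extensionality; auto. Qed.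

Lemma HmulA n m lam x y z : Hmul n m lam x (Hmul n m lam y z) = Hmul n m lam (Hmul n m lam x y) z.
Proof. apply Heq; simpl; intros. ring. rewrite Bf_addr, Bf_addl. ring. Qed.

Lemma Hmul1l n m lam x : Hmul n m lam Hone x = x.
Proof. apply Heq; simpl; intros. reflexivity. unfold Hone; simpl. rewrite Bf_zl. unfold zero. ring. Qed.

Lemma HmulVl n m lam x : Hmul n m lam (Hinv n m lam x) x = Hone.
Proof. apply Heq; simpl; intros. unfold zero; ring. rewrite Bf_oppl. unfold zero; ring. Qed.

Definition HG n m lam : group := Group Hcar (Hmul n m lam) Hone (Hinv n m lam)
  (HmulA n m lam) (Hmul1l n m lam) (HmulVl n m lam).


Definition aH n m lam (i : nat) : HG n m lam := (unit i, zero).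
Definition cH n m lam (i : nat) : HG n m lam := (zero, unit i).

Ltac hs := cbn [gmul gone ginv HG Hmul Hinv Hone fst snd aH cH gcar].

Lemma unit_sym i s : unit i s = if Nat.eqb i s then 1 else 0.
Proof. unfold unit. rewrite Nat.eqb_sym. reflexivity. Qed.

Lemma zsum_cons k l f : zsum (k :: l) f = f k + zsum l f.
Proof. reflexivity. Qed.

Lemma npow_aH n m lam i N : npow (aH n m lam i) N = (fun s => Z.of_nat N * unit i s, zero).
Proof. induction N.
  - apply Heq; reflexivity.
  - change (npow (aH n m lam i) (S N)) with (aH n m lam i ** npow (aH n m lam i) N). rewrite IHN.
    apply Heq; intros; hs. rewrite Nat2Z.inj_succ; ring.
    rewrite Bf_vanish. unfold zero; ring. intros p q Hpq. unfold unit.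
    destruct (Nat.eqb_spec q i); destruct (Nat.eqb_spec p i); try lia; ring.
Qed.

Lemma zpow_aH n m lam i k : zpow (aH n m lam i) k = (fun s => k * unit i s, zero).
Proof. destruct (zcases k) as [[N ->]|[N ->]].
  - rewrite zpow_nat, npow_aH. reflexivity.
  - rewrite zpow_negnat, npow_aH. apply Heq; intros; hs. ring.
    rewrite Bf_vanish. unfold zero; ring. intros p q Hpq. unfold unit.
    destruct (Nat.eqb_spec q i); destruct (Nat.eqb_spec p i); try lia; ring.
Qed.

Lemma npow_cH n m lam i N : npow (cH n m lam i) N = (zero, fun s => Z.of_nat N * unit i s).
Proof. induction N.
  - apply Heq; reflexivity.
  - change (npow (cH n m lam i) (S N)) with (cH n m lam i ** npow (cH n m lam i) N). rewrite IHN.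
    apply Heq; intros; hs. reflexivity.
    rewrite Bf_zl. rewrite Nat2Z.inj_succ; ring.
Qed.

Lemma zpow_cH n m lam i k : zpow (cH n m lam i) k = (zero, fun s => k * unit i s).
Proof. destruct (zcases k) as [[N ->]|[N ->]].
  - rewrite zpow_nat, npow_cH. reflexivity.
  - rewrite zpow_negnat, npow_cH. apply Heq; intros; hs. reflexivity.
    rewrite Bf_zl. lia.
Qed.

Lemma gprod_aH n m lam x k len :
  gprod (map (fun i => zpow (aH n m lam i) (x i)) (seq k len)) =
  (fun s => zsum (seq k len) (fun j => x j * unit j s), zero).
Proof. revert k. induction len; intros k.
  - apply Heq; reflexivity.
  - change (zpow (aH n m lam k) (x k) ** gprod (map (fun i => zpow (aH n m lam i) (x i)) (seq (S k) len)) =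
      (fun s => zsum (seq k (S len)) (fun j => x j * unit j s), zero)).
    rewrite IHlen, zpow_aH. apply Heq; intros; hs. change (seq k (S len)) with (k :: seq (S k) len). rewrite zsum_cons. ring.
    rewrite Bf_vanish. unfold zero; ring. intros p q Hpq. unfold unit at 1.
    destruct (Nat.eqb_spec q k); [|ring]. subst.
    rewrite (zsum_ext_in _ _ (fun _ => 0)). rewrite zsum_zero. ring.
    intros j Hj. apply in_seq in Hj. unfold unit. destruct (Nat.eqb_spec p j). lia. ring.
Qed.

Lemma gprod_cH n m lam y k len :
  gprod (map (fun i => zpow (cH n m lam i) (y i)) (seq k len)) =
  (zero, fun s => zsum (seq k len) (fun j => y j * unit j s)).
Proof. revert k. induction len; intros k.
  - apply Heq; reflexivity.
  - change (zpow (cH n m lam k) (y k) ** gprod (map (fun i => zpow (cH n m lam i) (y i)) (seq (S k) len)) =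
      (zero, fun s => zsum (seq k (S len)) (fun j => y j * unit j s))).
    rewrite IHlen, zpow_cH. apply Heq; intros; hs. reflexivity.
    rewrite Bf_zl. change (seq k (S len)) with (k :: seq (S k) len). rewrite zsum_cons. unfold zero; ring.
Qed.

Lemma zsum_unit k len x s : zsum (seq k len) (fun j => x j * unit j s) =
  if (Nat.leb k s && Nat.ltb s (k + len))%bool then x s else 0.
Proof. rewrite <- zsum_sel. apply zsum_ext. intros j. unfold unit.
  destruct (Nat.eqb_spec s j); destruct (Nat.eqb_spec j s); subst; try lia; ring. Qed.

Lemma rels_H n m lam : rels n m lam (HG n m lam) (aH n m lam) (cH n m lam).
Proof. split; [|split].
  - intros i j Hij Hjn. apply comm_of. unfold pprod. rewrite gprod_cH.
    apply Heq; intros; hs. unfold zero; ring.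
    rewrite Bf_zr, (Bf_units n m lam i j) by auto.
    rewrite (Bf_vanish _ _ _ (unit i)). rewrite zsum_unit. simpl.
    destruct (Nat.ltb t m); unfold zero; ring.
    intros p q Hpq. unfold unit. destruct (Nat.eqb_spec q i); destruct (Nat.eqb_spec p j); try lia; ring.
  - intros i j _ _. apply comm_of. apply Heq; intros; hs. unfold zero; ring.
    rewrite !Bf_zl, !Bf_zr. unfold zero; ring.
  - intros i j _ _. apply comm_of. apply Heq; intros; hs. unfold zero; ring.
    rewrite !Bf_zl, ?Bf_zr. unfold zero; ring.
Qed.


Lemma twist_gen {G : group} (x y : G) (D : Z -> G) :
  (forall k, central (D k)) -> D 0 = gone -> (forall k, D (k + 1) = D k ** D 1) ->
  x ** y = y ** x ** D 1 -> forall k, x ** zpow y k = zpow y k ** x ** D k.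
Proof. intros Hc H0 HD Hxy. apply Z.peano_ind.
  - simpl. rewrite H0, (@mulg1 G), (@mulg1 G), gmul1l. reflexivity.
  - intros k IH. rewrite <- Z.add_1_r, HD, !zpow_succ.
    rewrite gmulA, Hxy. rewrite <- (gmulA _ (y ** x)), (Hc 1 (zpow y k)), gmulA.
    rewrite <- (gmulA _ y x), IH. rewrite !gmulA. reflexivity.
  - intros k IH. set (j := Z.pred k). assert (Hk : k = j + 1) by (unfold j; lia).
    clearbody j. subst k. rewrite HD, zpow_succ in IH.
    rewrite gmulA, Hxy in IH. rewrite <- (gmulA _ (y ** x)), (Hc 1 (zpow y j)), gmulA in IH.
    rewrite !gmulA in IH.
    apply mulg_canr in IH. rewrite <- !gmulA in IH. apply mulg_canl in IH.
    rewrite IH, !gmulA. reflexivity.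
Qed.

Lemma c_central n m lam (G : group) (a c : nat -> G) :
  rels n m lam G a c -> (forall g : G, generated n m a c g) ->
  forall t, (t < m)%nat -> central (c t).
Proof. intros [H1 [H2 H3]] Hgen t Ht z. induction (Hgen z).
  - apply commute_sym, comm_one, H2; auto.
  - apply comm_one, H3; auto.
  - apply commute1.
  - apply commuteM; auto.
  - apply commuteV; auto.
Qed.

Lemma C_central n m lam (G : group) (a c : nat -> G) :
  rels n m lam G a c -> (forall g : G, generated n m a c g) ->
  forall y, central (pprod m c y).
Proof. intros Hr Hg y. apply central_gprod. intros z Hz. apply in_map_iff in Hz.
  destruct Hz as [i [<- Hi]]. apply in_seq in Hi. apply central_zpow.
  apply (c_central n m lam G a c); auto; lia. Qed.

Lemma gprod_mul_central {G : group} (l : list nat) (u v : nat -> G) :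
  (forall i, In i l -> central (v i)) ->
  gprod (map (fun i => u i ** v i) l) = gprod (map u l) ** gprod (map v l).
Proof. induction l as [|i l IH]; intros H; simpl.
  - rewrite gmul1l. reflexivity.
  - rewrite IH by (intros; apply H; simpl; auto).
    rewrite <- !gmulA. f_equal. rewrite !gmulA. f_equal. apply H. simpl; auto.
Qed.

Lemma C_add n m lam (G : group) (a c : nat -> G) :
  rels n m lam G a c -> (forall g : G, generated n m a c g) ->
  forall y w, pprod m c (fun t => y t + w t) = pprod m c y ** pprod m c w.
Proof. intros Hr Hg y w. unfold pprod.
  rewrite (map_ext _ (fun i => zpow (c i) (y i) ** zpow (c i) (w i))) by (intros; apply zpow_add).
  apply gprod_mul_central. intros i Hi. apply in_seq in Hi. apply central_zpow.
  apply (c_central n m lam G a c); auto; lia. Qed.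

Lemma C_zero m (G : group) (c : nat -> G) : pprod m c (fun _ => 0) = gone.
Proof. unfold pprod. apply gprod_ones. Qed.

Lemma fext_pprod m (G : group) (c : nat -> G) e e' : (forall t, e t = e' t) -> pprod m c e = pprod m c e'.
Proof. intros H. f_equal. apply functional_extensionality; auto. Qed.

Lemma a_swap n m lam (G : group) (a c : nat -> G) :
  rels n m lam G a c -> (forall g : G, generated n m a c g) ->
  forall i j, (j < i)%nat -> (i < n)%nat ->
  a i ** a j = a j ** a i ** pprod m c (fun t => - lam j i t).
Proof. intros Hr Hg i j Hji Hin.
  pose proof (comm_rel _ _ _ (proj1 Hr j i Hji Hin)) as E.
  rewrite E, <- gmulA, <- (C_add n m lam G a c) by auto.
  rewrite (fext_pprod m G c _ (fun _ => 0)) by (intros; ring).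
  rewrite C_zero, (@mulg1 G). reflexivity. Qed.

Lemma a_twist n m lam (G : group) (a c : nat -> G) :
  rels n m lam G a c -> (forall g : G, generated n m a c g) ->
  forall i j, (j < i)%nat -> (i < n)%nat -> forall k,
  a i ** zpow (a j) k = zpow (a j) k ** a i ** pprod m c (fun t => k * - lam j i t).
Proof. intros Hr Hg i j Hji Hin.
  apply (twist_gen (a i) (a j) (fun k => pprod m c (fun t => k * - lam j i t))).
  - intros k. apply (C_central n m lam G a c); auto.
  - rewrite (fext_pprod m G c _ (fun _ => 0)) by (intros; ring). apply C_zero.
  - intros k. rewrite <- (C_add n m lam G a c) by auto. apply fext_pprod. intros; ring.
  - rewrite (fext_pprod m G c _ (fun t => - lam j i t)) by (intros; ring).
    apply (a_swap n m lam G a c); auto.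
Qed.

Lemma a_push n m lam (G : group) (a c : nat -> G) :
  rels n m lam G a c -> (forall g : G, generated n m a c g) ->
  forall i x, (i < n)%nat -> forall l, (forall j, In j l -> (j < i)%nat) ->
  a i ** gprod (map (fun j => zpow (a j) (x j)) l) =
  gprod (map (fun j => zpow (a j) (x j)) l) ** a i ** pprod m c (fun t => zsum l (fun j => x j * - lam j i t)).
Proof. intros Hr Hg i x Hin l. induction l as [|j l IH]; intros Hl.
  - change (zsum [] ?f) with 0. rewrite C_zero. simpl. rewrite gmul1l, !(@mulg1 G). reflexivity.
  - change (zsum (j :: l) ?f) with (f j + zsum l f).
    rewrite (C_add n m lam G a c) by auto.
    cbn [map gprod fold_right].
    fold (gprod (map (fun j => zpow (a j) (x j)) l)).
    set (P := gprod (map (fun j => zpow (a j) (x j)) l)) in *.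
    rewrite gmulA, (a_twist n m lam G a c Hr Hg i j) by (auto; apply Hl; simpl; auto).
    set (Dj := pprod m c (fun t => x j * - lam j i t)).
    set (Dl := pprod m c (fun t => zsum l (fun j0 => x j0 * - lam j0 i t))).
    assert (HDj : central Dj) by (apply (C_central n m lam G a c); auto).
    rewrite <- (gmulA _ _ Dj P), (HDj P), !gmulA, <- (gmulA _ _ (a i) P), IH by (intros; apply Hl; simpl; auto).
    rewrite <- !gmulA. do 3 f_equal. symmetry. apply HDj.
Qed.

Lemma seq_split i N : (i < N)%nat -> seq 0 N = seq 0 i ++ i :: seq (S i) (N - S i).
Proof. intros H. replace N with (i + S (N - S i))%nat at 1 by lia. rewrite seq_app. reflexivity. Qed.

Lemma pprod_split {G : group} N (b : nat -> G) e i : (i < N)%nat ->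
  pprod N b e = gprod (map (fun j => zpow (b j) (e j)) (seq 0 i)) **
    (zpow (b i) (e i) ** gprod (map (fun j => zpow (b j) (e j)) (seq (S i) (N - S i)))).
Proof. intros H. unfold pprod. rewrite (seq_split i N H), map_app, gprod_app. reflexivity. Qed.

Lemma pprod_bump {G : group} N (b : nat -> G) e i : (i < N)%nat ->
  pprod N b (fun s => e s + unit i s) = gprod (map (fun j => zpow (b j) (e j)) (seq 0 i)) **
    (b i ** zpow (b i) (e i) ** gprod (map (fun j => zpow (b j) (e j)) (seq (S i) (N - S i)))).
Proof. intros H. rewrite (pprod_split N b _ i H). f_equal.
  - f_equal. apply map_ext_in. intros j Hj. apply in_seq in Hj. unfold unit.
    destruct (Nat.eqb_spec j i); [lia|]. f_equal; ring.
  - rewrite <- zpow_succ. unfold unit. rewrite Nat.eqb_refl. f_equal.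
    f_equal. apply map_ext_in. intros j Hj. apply in_seq in Hj. unfold unit.
    destruct (Nat.eqb_spec j i); [lia|]. f_equal; ring.
Qed.

Lemma central_shift {G : group} (D X Y : G) : central D -> X ** D ** Y = X ** Y ** D.
Proof. intros HD. rewrite <- gmulA, (HD Y), gmulA. reflexivity. Qed.

Lemma a_step n m lam (G : group) (a c : nat -> G) :
  rels n m lam G a c -> (forall g : G, generated n m a c g) ->
  forall i x y, (i < n)%nat ->
  a i ** (pprod n a x ** pprod m c y) =
  pprod n a (fun s => x s + unit i s) **
  pprod m c (fun t => y t + zsum (seq 0 i) (fun j => x j * - lam j i t)).
Proof. intros Hr Hg i x y Hin.
  rewrite (pprod_split n a x i Hin), (pprod_bump n a x i Hin), (C_add n m lam G a c Hr Hg).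
  rewrite !gmulA. rewrite (a_push n m lam G a c Hr Hg i x Hin).
  2: { intros j Hj. apply in_seq in Hj. lia. }
  set (D := pprod m c (fun t => zsum (seq 0 i) (fun j => x j * - lam j i t))).
  assert (HD : central D) by (apply (C_central n m lam G a c); auto).
  rewrite !(central_shift D _ _ HD). reflexivity.
Qed.

Lemma c_step n m lam (G : group) (a c : nat -> G) :
  rels n m lam G a c -> (forall g : G, generated n m a c g) ->
  forall t x y, (t < m)%nat ->
  c t ** (pprod n a x ** pprod m c y) =
  pprod n a x ** pprod m c (fun s => y s + unit t s).
Proof. intros Hr Hg t x y Htm.
  assert (Hc : central (c t)) by (apply (c_central n m lam G a c); auto).
  rewrite gmulA, (Hc (pprod n a x)), <- gmulA. f_equal.
  rewrite (pprod_split m c y t Htm), (pprod_bump m c y t Htm).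
  rewrite !gmulA. rewrite (Hc (gprod _)). reflexivity.
Qed.

Definition NFS n m (G : group) (a c : nat -> G) (g : G) :=
  exists x y, g = pprod n a x ** pprod m c y.

Lemma NF_exists n m lam (G : group) (a c : nat -> G) :
  rels n m lam G a c -> (forall g : G, generated n m a c g) ->
  forall g, NFS n m G a c g.
Proof. intros Hr Hg.
  assert (Ha : forall i h, (i < n)%nat -> NFS n m G a c h -> NFS n m G a c (a i ** h) /\ NFS n m G a c (ginv (a i) ** h)).
  { intros i h Hin [x [y ->]]. split.
    - eexists; eexists. apply (a_step n m lam G a c Hr Hg i x y Hin).
    - set (x0 := fun s => x s - unit i s).
      exists x0, (fun t => y t - zsum (seq 0 i) (fun j => x0 j * - lam j i t)).
      apply (mulg_canl (a i)). rewrite (@mulVKg G), (a_step n m lam G a c Hr Hg i) by auto.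
      f_equal; apply fext_pprod; intros; unfold x0; ring. }
  assert (Hc : forall t h, (t < m)%nat -> NFS n m G a c h -> NFS n m G a c (c t ** h) /\ NFS n m G a c (ginv (c t) ** h)).
  { intros t h Htm [x [y ->]]. split.
    - eexists; eexists. apply (c_step n m lam G a c Hr Hg t x y Htm).
    - exists x, (fun s => y s - unit t s).
      apply (mulg_canl (c t)). rewrite (@mulVKg G), (c_step n m lam G a c Hr Hg t) by auto.
      f_equal; apply fext_pprod; intros; ring. }
  assert (Hall : forall g, (forall h, NFS n m G a c h -> NFS n m G a c (g ** h)) /\
                          (forall h, NFS n m G a c h -> NFS n m G a c (ginv g ** h))).
  { intros g. induction (Hg g) as [i Hi|t Ht| |x y _ [IHx1 IHx2] _ [IHy1 IHy2]|x _ [IH1 IH2]].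
    - split; intros h Hh; apply Ha; auto.
    - split; intros h Hh; apply Hc; auto.
    - split; intros h Hh. rewrite gmul1l; auto. rewrite (@invg1 G), gmul1l; auto.
    - split; intros h Hh. rewrite <- gmulA; auto. rewrite (@invgM G), <- gmulA; auto.
    - split; intros h Hh. auto. rewrite (@invgK G); auto. }
  intros g. rewrite <- (@mulg1 G g). apply Hall.
  exists (fun _ => 0), (fun _ => 0). rewrite !C_zero, (@mulg1 G). reflexivity.
Qed.


Theorem lemma4p3 (n m : nat) (lam : nat -> nat -> nat -> Z)
  (G : group) (a c : nat -> G) :
  (2 <= n)%nat -> (1 <= m)%nat ->
  presented n m lam G a c ->
  exists (alpha gamma : nat -> G -> Z),
    (forall g : G, g = gmul (pprod n a (fun i => alpha i g))
                            (pprod m c (fun t => gamma t g))) /\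
    (forall (g : G) (x y : nat -> Z),
       g = gmul (pprod n a x) (pprod m c y) ->
       (forall i, (i < n)%nat -> x i = alpha i g) /\
       (forall t, (t < m)%nat -> y t = gamma t g)).
Proof.
  intros _ _ [Hr [Hg Hu]].
  destruct (Hu (HG n m lam) (aH n m lam) (cH n m lam) (rels_H n m lam)) as [f [Hf [Ha Hc]]].
  assert (K : forall x y, f (pprod n a x ** pprod m c y) =
     pprod n (aH n m lam) x ** pprod m (cH n m lam) y).
  { intros x y. rewrite Hf, !hom_pprod by auto. f_equal; apply pprod_ext; intros; split; auto. }
  assert (Kx : forall x y i, (i < n)%nat -> fst (f (pprod n a x ** pprod m c y)) i = x i).
  { intros x y i Hi. rewrite K. unfold pprod. rewrite gprod_aH, gprod_cH. hs.
    rewrite zsum_unit. destruct (Nat.leb_spec 0 i); [|lia]. destruct (Nat.ltb_spec i (0 + n)); [|lia].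
    simpl. unfold zero. ring. }
  assert (Ky : forall x y t, (t < m)%nat -> snd (f (pprod n a x ** pprod m c y)) t = y t).
  { intros x y t Ht. rewrite K. unfold pprod. rewrite gprod_aH, gprod_cH. hs.
    rewrite Bf_zr, zsum_unit. destruct (Nat.leb_spec 0 t); [|lia]. destruct (Nat.ltb_spec t (0 + m)); [|lia].
    simpl. unfold zero. ring. }
  exists (fun i g => fst (f g) i), (fun t g => snd (f g) t). split.
  - intros g. destruct (NF_exists n m lam G a c Hr Hg g) as [x [y E]].
    transitivity (pprod n a x ** pprod m c y); [exact E|].
    f_equal; apply pprod_ext; intros; split; auto; rewrite E; symmetry; auto.
  - intros g x y E. split; intros; rewrite E; symmetry; auto.
Qed.
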